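(* Let $k$ be a positive integer and let $G$ be a graph that is not $(k+1)$-connected and has minimum degree at least $\frac{3k-1}{2}$. Then: (1) If $(S,K)\in P_0(G)$ and $(S',K')\in P(G)$ are distinct, then $K\subseteq K'$ or $(K\cup S)\cap(K'\cup S')=S\cap S'$. (2) If $(S,K),(S',K')\in P_0(G)$ are distinct, then $(K\cup S)\cap(K'\cup S')=S\cap S'$. (3) A pair $(S,K)\in P(G)$ lies in $P_0(G)$ if and only if there is no separator $S'$ of $G$ of minimum cardinality with $S'\cap K\ne\emptyset$.
   Context: Graphs are finite, simple, undirected. A graph is $k$-connected if it has more than $k$ vertices and removing any fewer than $k$ vertices leaves it connected. A separator of $G$ is a set $S\subseteq V(G)$ such that $G-S$ is disconnected. $P(G)$ is the set of pairs $(S,K)$ where $S$ is a separator of $G$ of minimum cardinality and $K\subseteq V(G)\setminus S$ is the vertex set of a connected component of $G-S$; it is partially ordered by $(S,K)\le(S',K')$ iff $K\subseteq K'$, and $P_0(G)$ denotes the set of minimal elements of $P(G)$. *)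

(* Defs.v *)
(* A finite simple graph: vertex type T : finType,
   adjacency e : rel T, assumed symmetric and irreflexive in the theorem. *)
From mathcomp Require Import all_boot.
Set Implicit Arguments. Unset Strict Implicit. Unset Printing Implicit Defensive.

Section Graph.
Variables (T : finType) (e : rel T).

Definition induced_rel (A : {set T}) : rel T :=
  [rel x y | [&& e x y, x \in A & y \in A]].

(* the induced subgraph G[A] is connected (the empty graph counts as connected) *)
Definition connected_in (A : {set T}) : Prop :=
  forall x y, x \in A -> y \in A -> connect (induced_rel A) x y.

Definition k_connected (k : nat) : Prop :=
  k < #|T| /\ forall X : {set T}, #|X| < k -> connected_in (~: X).

Definition deg (x : T) : nat := #|[set y | e x y]|.

Definition separator (S : {set T}) : Prop :=
  exists x y, [/\ x \notin S, y \notin S & ~~ connect (induced_rel (~: S)) x y].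

Definition min_separator (S : {set T}) : Prop :=
  separator S /\ forall S' : {set T}, separator S' -> #|S| <= #|S'|.

Definition component_of (S K : {set T}) : Prop :=
  exists2 x, x \notin S & K = [set y | connect (induced_rel (~: S)) x y].

Definition inP (S K : {set T}) : Prop := min_separator S /\ component_of S K.

(* (S, K) \in P_0(G): minimal w.r.t. (S,K) <= (S',K') iff K \subset K' *)
Definition inP0 (S K : {set T}) : Prop :=
  inP S K /\ forall S' K' : {set T}, inP S' K' -> K' \subset K -> K' = K.

End Graph.

(* Main.v *)
Require Import Defs.
From mathcomp Require Import all_boot zify.
Set Implicit Arguments. Unset Strict Implicit. Unset Printing Implicit Defensive.

Section G.
Variables (T : finType) (e : rel T).
Hypothesis sym : symmetric e.
Hypothesis irr : irreflexive e.

Local Notation R S := (induced_rel e (~: S)).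

Lemma stay (X Y : {set T}) x z :
  (forall a c, a \in X -> e a c -> c \notin Y -> c \in X) ->
  x \in X -> connect (R Y) x z -> z \in X.
Proof.
move=> cl xX /connectP[p pp ->]; elim: p x xX pp => [|y p IH] x xX //=.
case/andP=> /andP[exy /andP[_ yY]] pp; apply: (IH y _ pp).
by apply: (cl x y xX exy); rewrite inE in yY.
Qed.

Lemma sep_of (X Y : {set T}) x z :
  (forall a, a \in X -> a \notin Y) ->
  (forall a c, a \in X -> e a c -> (c \in X) || (c \in Y)) ->
  x \in X -> z \notin X -> z \notin Y -> separator e Y.
Proof.
move=> dis cl xX zX zY; exists x, z; split => //; first exact: dis.
have H : forall a c, a \in X -> e a c -> c \notin Y -> c \in X.
  by move=> a c aX eac cY; move: (cl a c aX eac); rewrite (negbTE cY) orbF.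
by apply/negP => /(stay H xX); apply/negP.
Qed.

Lemma Rsym S : symmetric (R S).
Proof. move=> x y; rewrite /induced_rel /= sym. by case: (e y x); case: (x \in _); case: (y \in _). Qed.

Lemma conn_notin (S : {set T}) (x a : T) : x \notin S -> connect (R S) x a -> a \notin S.
Proof.
move=> xS xa; have : a \in ~: S.
  by apply: (stay (Y := S) _ _ xa) => [a' c _ _ cS|]; rewrite inE.
by rewrite inE.
Qed.

Definition side (S A : {set T}) :=
  [/\ forall a, a \in A -> a \notin S, exists a, a \in A
    & forall a c, a \in A -> e a c -> (c \in A) || (c \in S)].

Definition comp (S : {set T}) x := [set y | connect (R S) x y].

Lemma comp_side (S : {set T}) (x : T) : x \notin S -> side S (comp S x).
Proof.
move=> xS; split.
- by move=> a; rewrite inE; apply: conn_notin.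
- by exists x; rewrite inE connect0.
move=> a c; rewrite !inE => xa eac; case: (boolP (c \in S)) => cS; rewrite ?orbT ?orbF //.
apply: (connect_trans xa); apply: connect1; rewrite /induced_rel /= eac !inE cS andbT.
exact: (conn_notin xS xa).
Qed.

Lemma compl_side (S A : {set T}) z : side S A -> z \notin A -> z \notin S ->
  side S (~: (A :|: S)).
Proof.
case=> dis ne cl zA zS; split.
- by move=> a; rewrite !inE negb_or; case/andP.
- by exists z; rewrite !inE negb_or zA.
move=> a c; rewrite !inE negb_or => /andP[aA aS] eac.
case: (boolP (c \in S)) => cS; rewrite ?orbT // orbF.
rewrite orbF.
apply/negP => cA; move: (cl c a cA); rewrite sym => /(_ eac).
by rewrite (negbTE aA) (negbTE aS).
Qed.

Lemma comp_compl_side (S : {set T}) x : x \notin S -> separator e S ->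
  side S (~: (comp S x :|: S)).
Proof.
move=> xS [u [v [uS vS nuv]]].
have sc : connect_sym (R S) by apply: sym_connect_sym; apply: Rsym.
case: (boolP (u \in comp S x)) => uK; last exact: (compl_side (comp_side xS) uK uS).
case: (boolP (v \in comp S x)) => vK; last exact: (compl_side (comp_side xS) vK vS).
rewrite !inE in uK vK; move: nuv; rewrite (connect_trans _ vK) //.
by rewrite sc.
Qed.

Lemma cardU2 (X Y : {set T}) : (forall v, v \in X -> v \notin Y) -> #|X :|: Y| = #|X| + #|Y|.
Proof.
move=> H; have E : X :&: Y = set0.
  apply/setP => v; rewrite !inE; case: (boolP (v \in X)) => // /H /negbTE -> //.
by rewrite -cardsUI E cards0 addn0.
Qed.

Lemma deg_bound (S A : {set T}) k : side S A -> #|S| <= k ->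
  (forall x, 3 * k - 1 <= 2 * deg e x) -> #|S| < 2 * #|A|.
Proof.
case=> dis [x xA] cl kS degc.
have sub : [set y | e x y] \subset (A :\ x) :|: S.
  apply/subsetP => y; rewrite !inE => exy.
  have := cl x y xA exy; case/orP => H; last by rewrite H orbT.
  rewrite H andbT; apply/orP; left.
  by apply/eqP => yx; move: exy; rewrite yx irr.
have := subset_leq_card sub; have := (leq_card_setU (A :\ x) S).1.
have := cardsD1 x A; rewrite xA.
have := degc x; rewrite /deg.
move=> h1 /= h2 h3 h4; lia.
Qed.

Definition corner (S S' X Y : {set T}) := (S :&: Y) :|: (S :&: S') :|: (X :&: S').

Lemma corner_side (S S' X Y : {set T}) : side S X -> side S' Y -> X :&: Y != set0 ->
  side (corner S S' X Y) (X :&: Y).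
Proof.
case=> dX _ cX [dY _ cY] /set0Pn ne; split => //.
- move=> a; rewrite !inE => /andP[aX aY].
  by rewrite (negbTE (dX a aX)) (negbTE (dY a aY)) aX /=.
move=> a c; rewrite !inE => /andP[aX aY] eac.
move: (cX a c aX eac) (cY a c aY eac).
by case: (c \in X); case: (c \in Y); case: (c \in S); case: (c \in S').
Qed.

Lemma corner_sep (S S' X Y : {set T}) z : side S X -> side S' Y -> X :&: Y != set0 ->
  z \notin X -> z \notin S -> separator e (corner S S' X Y).
Proof.
move=> sX sY ne zX zS; have [d [x xXY] c] := corner_side sX sY ne.
apply: (sep_of (z := z) d c xXY); rewrite !inE ?(negbTE zX) ?(negbTE zS) //=.
Qed.

Lemma corner_card (S S' X Y : {set T}) : side S X -> side S' Y ->
  #|corner S S' X Y| = #|S :&: Y| + #|S :&: S'| + #|X :&: S'|.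
Proof.
case=> dX _ _ [dY _ _]; rewrite /corner !cardU2 // => v; rewrite !inE;
  have := dX v; have := dY v;
  case: (v \in X); case: (v \in Y); case: (v \in S); case: (v \in S') => //= h1 h2;
  by [move: (h1 isT) | move: (h2 isT)].
Qed.

Lemma part3 (S S' B : {set T}) : side S' B ->
  #|S| = #|S :&: B| + #|S :&: S'| + #|S :&: ~: (B :|: S')|.
Proof.
case=> dB _ _.
have E : S = (S :&: B) :|: (S :&: S') :|: (S :&: ~: (B :|: S')).
  apply/setP => v; rewrite !inE.
  by case: (v \in S); case: (v \in B); case: (v \in S').
rewrite {1}E !cardU2 // => v; rewrite !inE; have := dB v;
  case: (v \in S); case: (v \in B); case: (v \in S') => //= h1;
  by move: (h1 isT).
Qed.

Lemma empty_row (X Y S' : {set T}) : X :&: Y = set0 -> X :&: ~: (Y :|: S') = set0 ->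
  #|X| <= #|X :&: S'|.
Proof.
move=> h1 h2; apply: subset_leq_card; apply/subsetP => v vX.
move/setP: h1 => /(_ v); move/setP: h2 => /(_ v); rewrite !inE vX /=.
by case: (v \in Y); case: (v \in S').
Qed.

Lemma min_le (S S' : {set T}) : min_separator e S -> separator e S' -> #|S| <= #|S'|.
Proof. by case=> _ H /H. Qed.

Lemma cross (S S' A B : {set T}) k :
  min_separator e S -> min_separator e S' -> #|S| <= k ->
  (forall x, 3 * k - 1 <= 2 * deg e x) ->
  side S A -> side S (~: (A :|: S)) -> side S' B -> side S' (~: (B :|: S')) ->
  exists Y Z : {set T}, ((Y = B /\ Z = ~: (B :|: S')) \/ (Y = ~: (B :|: S') /\ Z = B)) /\
    A :&: Y != set0 /\ #|S :&: Y| + #|S :&: S'| + #|A :&: S'| = #|S|.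
Proof.
move=> mS mS' kS degc sA sA' sB sB'.
set A' := ~: (A :|: S) in sA' *; set B' := ~: (B :|: S') in sB' *.
have eqS : #|S'| = #|S|.
  by apply/eqP; rewrite eqn_leq (min_le mS' mS.1) (min_le mS mS'.1).
have kS' : #|S'| <= k by rewrite eqS.
have pS : #|S| = #|S :&: B| + #|S :&: S'| + #|S :&: B'| := part3 S sB.
have pS' := part3 S' sA.
rewrite [S' :&: A]setIC [S' :&: S]setIC [S' :&: A']setIC in pS'.
have zA : exists z, z \in A by case: sA.
have zA' : exists z, z \in A' by case: sA'.
have c11 : A :&: B != set0 -> #|S| <= #|S :&: B| + #|S :&: S'| + #|A :&: S'|.
  move=> ne; case: zA' => z; rewrite !inE negb_or => /andP[zA0 zS].
  by rewrite -(corner_card sA sB); apply: (min_le mS); apply: (corner_sep sA sB ne zA0 zS).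
have c12 : A :&: B' != set0 -> #|S| <= #|S :&: B'| + #|S :&: S'| + #|A :&: S'|.
  move=> ne; case: zA' => z; rewrite !inE negb_or => /andP[zA0 zS].
  by rewrite -(corner_card sA sB'); apply: (min_le mS); apply: (corner_sep sA sB' ne zA0 zS).
have c21 : A' :&: B != set0 -> #|S| <= #|S :&: B| + #|S :&: S'| + #|A' :&: S'|.
  move=> ne; case: zA => z zA; have zS : z \notin S by case: sA => d _ _; apply: d.
  have zA1 : z \notin A' by rewrite !inE zA.
  by rewrite -(corner_card sA' sB); apply: (min_le mS); apply: (corner_sep sA' sB ne zA1 zS).
have c22 : A' :&: B' != set0 -> #|S| <= #|S :&: B'| + #|S :&: S'| + #|A' :&: S'|.
  move=> ne; case: zA => z zA; have zS : z \notin S by case: sA => d _ _; apply: d.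
  have zA1 : z \notin A' by rewrite !inE zA.
  by rewrite -(corner_card sA' sB'); apply: (min_le mS); apply: (corner_sep sA' sB' ne zA1 zS).
have r1 : A :&: B = set0 -> A :&: B' = set0 -> #|A| <= #|A :&: S'| by apply: empty_row.
have r2 : A' :&: B = set0 -> A' :&: B' = set0 -> #|A'| <= #|A' :&: S'| by apply: empty_row.
have q1 : A :&: B = set0 -> A' :&: B = set0 -> #|B| <= #|S :&: B|.
  by move=> h1 h2; rewrite setIC; apply: (empty_row (Y := A)); rewrite setIC.
have q2 : A :&: B' = set0 -> A' :&: B' = set0 -> #|B'| <= #|S :&: B'|.
  by move=> h1 h2; rewrite setIC; apply: (empty_row (Y := A)); rewrite setIC.
have dA := deg_bound sA kS degc.
have dA' := deg_bound sA' kS degc.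
have dB := deg_bound sB kS' degc.
have dB' := deg_bound sB' kS' degc.
clear zA zA' sA sA' sB sB' mS mS' kS' degc.
case: (eqVneq (A :&: B) set0) => h11; case: (eqVneq (A :&: B') set0) => h12;
case: (eqVneq (A' :&: B) set0) => h21; case: (eqVneq (A' :&: B') set0) => h22;
repeat match goal with H : ?P -> _, H' : ?P |- _ => specialize (H H') end;
first [ (exists B, B'; split; [by left | split; [exact h11 | lia]])
      | (exists B', B; split; [by right | split; [exact h12 | lia]])
      | (exfalso; lia) ].
Qed.

Lemma side_comp_sub (C X : {set T}) x : side C X -> x \in X -> comp C x \subset X.
Proof.
case=> _ _ cl xX; apply/subsetP => v; rewrite inE; apply: stay xX.
by move=> a c aX eac cC; move: (cl a c aX eac); rewrite (negbTE cC) orbF.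
Qed.

Lemma inP_side (S K : {set T}) : inP e S K -> side S K /\ side S (~: (K :|: S)).
Proof.
case=> mS [x xS ->]; split; first exact: comp_side.
exact: comp_compl_side xS mS.1.
Qed.

Lemma P0_main (S K S' B : {set T}) k :
  inP0 e S K -> min_separator e S' -> #|S| <= k ->
  (forall x, 3 * k - 1 <= 2 * deg e x) ->
  side S' B -> side S' (~: (B :|: S')) ->
  (forall v, v \in K -> v \notin S') /\
  exists Y Z : {set T}, ((Y = B /\ Z = ~: (B :|: S')) \/ (Y = ~: (B :|: S') /\ Z = B)) /\
    K \subset Y /\ S :&: Z = set0.
Proof.
move=> [iP P0] mS' kS degc sB sB'.
have [sK sK'] := inP_side iP.
have mS := iP.1.
have [Y [Z [hYZ [ne card]]]] := cross mS mS' kS degc sK sK' sB sB'.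
have sY : side S' Y by case: hYZ => [[-> _]|[-> _]].
have sX := corner_side sK sY ne.
have [z zK'] : exists z, z \in ~: (K :|: S) by case: sK'.
move: (zK'); rewrite !inE negb_or => /andP[zK zS].
have sepC := corner_sep sK sY ne zK zS.
have mC : min_separator e (corner S S' K Y).
  split => // S2 /(min_le mS); by rewrite (corner_card sK sY) card.
have [dX [x0 x0X] _] := sX.
have iP2 : inP e (corner S S' K Y) (comp (corner S S' K Y) x0).
  by split => //; exists x0 => //; apply: dX.
have sub := side_comp_sub sX x0X.
have E := P0 _ _ iP2 (subset_trans sub (subsetIl _ _)).
have KY : K \subset Y by rewrite -E; apply: (subset_trans sub); apply: subsetIr.
have KS' : forall v, v \in K -> v \notin S'.
  by move=> v /(subsetP KY); case: sY => d _ _; apply: d.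
split => //; exists Y, Z; split => //; split => //.
have K0 : K :&: S' = set0.
  apply/setP => v; rewrite !inE; case: (boolP (v \in K)) => //= /KS'; exact: negbTE.
move: card; rewrite K0 cards0 addn0 => card.
have pS : #|S| = #|S :&: Y| + #|S :&: S'| + #|S :&: Z|.
  case: hYZ => [[-> ->]|[-> ->]]; first exact: part3.
  rewrite (part3 S sB); lia.
apply: cards0_eq; lia.
Qed.

Lemma kappa_le (S : {set T}) k : ~ k_connected e k.+1 -> min_separator e S -> #|S| <= k.
Proof.
move=> nk mS; rewrite leqNgt; apply/negP => kS; apply: nk; split.
- have [x [y [xS yS nxy]]] := mS.1.
  have xy : x != y by apply/eqP => exy; move: nxy; rewrite exy connect0.
  have sub : S \subset ~: [set x; y].
    apply/subsetP => v vS; rewrite !inE negb_or.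
    by apply/andP; split; apply/eqP => ev; [move: xS | move: yS]; rewrite -ev vS.
  have h1 := subset_leq_card sub; have h2 := cardsC [set x; y]; rewrite cards2 xy in h2.
  move: h2 => /= h2; lia.
- move=> X hX u v uX vX; case: (boolP (connect _ u v)) => // nc; exfalso.
  have sX : separator e X by exists u, v; split => //; [move: uX | move: vX]; rewrite inE.
  have := min_le mS sX; lia.
Qed.

Lemma nbr (S K : {set T}) s : inP e S K -> s \in S -> exists2 y, y \in K & e y s.
Proof.
move=> iP sS; have [sK sK'] := inP_side iP; have mS := iP.1.
case: (boolP [exists y in K, e y s]) => [/exists_inP[y yK eys] | /exists_inP nb]; first by exists y.
exfalso; case: (sK) => dK [x xK] clK; case: (sK') => _ [z] + _; rewrite !inE negb_or => /andP[zK zS].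
have sep : separator e (S :\ s).
  apply: (sep_of (X := K) (x := x) (z := z)) => //.
  - by move=> a aK; rewrite !inE negb_and (dK a aK) orbT.
  - move=> a c aK eac; rewrite !inE; case/orP: (clK a c aK eac) => [->//|cS].
    rewrite cS andbT orbC; apply/orP; left; apply/eqP => cs; apply: nb; exists a => //.
    by rewrite -cs.
  - by rewrite !inE negb_and zS orbT.
have := min_le mS sep; have := cardsD1 s S; rewrite sS /=; lia.
Qed.

Lemma contain (S K S' K' : {set T}) : inP e S K -> inP e S' K' ->
  (forall v, v \in K -> v \notin S') -> K' \subset K -> K \subset K'.
Proof.
move=> iP iP' KS' sub; have [sK _] := inP_side iP; have [sK2 _] := inP_side iP'.
case: iP => _ [x xS EK]; case: iP' => _ [x' x'S EK'].
have x'K' : x' \in K' by rewrite EK' inE connect0.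
have x'K := subsetP sub _ x'K'.
have sc : connect_sym (R S) by apply: sym_connect_sym; apply: Rsym.
apply/subsetP => v vK.
have cv : connect (R S) x' v.
  move: (x'K) (vK); rewrite EK !inE => h1 h2; rewrite sc in h1; exact: connect_trans h1 h2.
have : v \in K' :&: K.
  apply: (stay (Y := S) _ _ cv); last by rewrite inE x'K' x'K.
  move=> a c; rewrite inE => /andP[aK' aK] eac cS.
  case: sK => _ _ cl; move: (cl a c aK eac); rewrite (negbTE cS) orbF => cK.
  case: sK2 => _ _ cl2; move: (cl2 a c aK' eac); rewrite (negbTE (KS' c cK)) orbF => cK'.
  by rewrite inE cK cK'.
by rewrite inE => /andP[].
Qed.

Lemma sub_sep (S S' K : {set T}) : inP e S K -> inP e S' K -> S \subset S'.
Proof.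
move=> iP iP'; apply/subsetP => s sS; have [y yK eys] := nbr iP sS.
have [[dK _ _] _] := inP_side iP; have [[_ _ cl] _] := inP_side iP'.
case/orP: (cl y s yK eys) => // sK; by move: (dK s sK); rewrite sS.
Qed.

Lemma part1 (S K S' K' : {set T}) k :
  ~ k_connected e k.+1 -> (forall x, 3 * k - 1 <= 2 * deg e x) ->
  inP0 e S K -> inP e S' K' ->
  K \subset K' \/ (K :|: S) :&: (K' :|: S') = S :&: S'.
Proof.
move=> nk degc iP0 iP'.
have [sB sB'] := inP_side iP'.
have kS := kappa_le nk iP0.1.1.
have [KS' [Y [Z [hYZ [KY SZ]]]]] := P0_main iP0 iP'.1 kS degc sB sB'.
case: hYZ => [[eY eZ]|[eY eZ]]; first by left; rewrite -eY.
right; subst Y Z; have [[dK _ _] _] := inP_side iP0.1.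
apply/setP => v; rewrite !inE.
have a1 : v \in K -> v \notin S by apply: dK.
have a2 : v \in K -> v \notin K'.
  by move/(subsetP KY); rewrite !inE negb_or => /andP[].
have a3 : v \in K -> v \notin S' by apply: KS'.
have a4 : v \in S -> v \notin K'.
  by move=> vS; apply/negP => vK'; move/setP: SZ => /(_ v); rewrite !inE vS vK'.
move: a1 a2 a3 a4.
case: (v \in K); case: (v \in S); case: (v \in K'); case: (v \in S') => //= h1 h2 h3 h4;
  by [move: (h1 isT) | move: (h2 isT) | move: (h3 isT) | move: (h4 isT)].
Qed.
End G.

Theorem lemma3 (T : finType) (e : rel T) (k : nat) :
  symmetric e -> irreflexive e ->
  0 < k ->
  ~ k_connected e k.+1 ->
  (forall x : T, 3 * k - 1 <= 2 * deg e x) ->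
  (* (1) *)
  (forall S K S' K' : {set T},
     inP0 e S K -> inP e S' K' -> (S, K) <> (S', K') ->
     K \subset K' \/ (K :|: S) :&: (K' :|: S') = S :&: S') /\
  (* (2) *)
  (forall S K S' K' : {set T},
     inP0 e S K -> inP0 e S' K' -> (S, K) <> (S', K') ->
     (K :|: S) :&: (K' :|: S') = S :&: S') /\
  (* (3) *)
  (forall S K : {set T},
     inP e S K ->
     (inP0 e S K <-> ~ exists S' : {set T}, min_separator e S' /\ S' :&: K != set0)).
Proof.
move=> sym irr k0 nk degc; split; last split.
- by move=> S K S' K' h1 h2 _; apply: (part1 sym irr nk degc h1 h2).
- move=> S K S' K' h1 h2 neq.
  case: (part1 sym irr nk degc h1 h2.1) => [KK'|//].
  case: (part1 sym irr nk degc h2 h1.1) => [K'K|E]; last by rewrite setIC E setIC.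
  have EK : K = K' by apply/eqP; rewrite eqEsubset KK' K'K.
  subst K'; exfalso; apply: neq.
  have ES : S = S'.
    apply/eqP; rewrite eqEsubset (sub_sep sym h1.1 h2.1) (sub_sep sym h2.1 h1.1) //.
  by rewrite ES.
- move=> S K iP; split.
  + move=> iP0 [S' [mS' ne]].
    have [u [_ [uS _ _]]] := mS'.1.
    have sB := comp_side e uS.
    have sB' := comp_compl_side sym uS mS'.1.
    have kS := kappa_le nk iP0.1.1.
    have [KS' _] := P0_main sym irr iP0 mS' kS degc sB sB'.
    case/set0Pn: ne => v; rewrite inE => /andP[vS' vK].
    by move: (KS' v vK); rewrite vS'.
  + move=> H; split => // S' K' iP' sub.
    have KS' : forall v, v \in K -> v \notin S'.
      move=> v vK; apply/negP => vS'; apply: H; exists S'; split; first exact: iP'.1.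
      by apply/set0Pn; exists v; rewrite inE vS' vK.
    by apply/eqP; rewrite eqEsubset sub (contain sym iP iP' KS' sub).
Qed.
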